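(* Let $C,C'',C'$ be three columns of the diagram of a composition of $n$, all of the same height $s$, with $C$ to the left of $C''$ and $C''$ to the left of $C'$, and such that $C''$ is the only column of height $s$ lying strictly between $C$ and $C'$ (so $(C,C'')$ and $(C'',C')$ are pairs of neighbouring columns). Then there is a non-zero scalar $\lambda\in\mathbb C$ such that $$f_{C,C'}=\lambda\, f_{C,C''}\, f_{C'',C'}$$ as polynomial functions on $\mathfrak m$.
   Context: Let $n\ge 2$ and $G=SL(n,\mathbb C)$. Let $B$ be the upper triangular matrices in $G$, $H$ the diagonal ones, $\mathfrak h=\mathrm{Lie}(H)$ and $\mathfrak n$ the strictly upper triangular matrices. Write $x_{i,j}$ for the matrix unit with $1$ in position $(i,j)$. A composition $(c_1,\dots,c_k)$ of $n$ (positive integers with sum $n$) determines the standard parabolic subgroup $P\supseteq B$ of block upper triangular matrices with diagonal blocks of sizes $c_1,\dots,c_k$. Let $\mathfrak m$ be the Lie algebra of the unipotent radical of $P$, i.e. the span of the $x_{i,j}$ with $i<j$ lying in different diagonal blocks. Let $P'$ be the derived group of $P$, acting on $\mathfrak m$ by the adjoint action. Diagram and tableau: the composition is represented by columns $C_1,\dots,C_k$ from left to right, where $C_i$ consists of $c_i$ boxes placed in rows $R_1,\dots,R_{c_i}$ (rows numbered from top to bottom). The boxes are filled with $1,\dots,n$ so that $C_i$ contains $c_1+\dots+c_{i-1}+1,\dots,c_1+\dots+c_i$, increasing downwards. The height of $C_i$ is $c_i$. Two columns of the same height $s$ are called neighbouring if no column of height $s$ lies strictly between them. The function $f_{C,C'}$: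 for two columns $C$ (left) and $C'$ (right) of the same height $s$, let $J$ be the interval of integers from the smallest entry of $C$ to the largest entry of $C'$, and $N=|J|$. For $X\in\mathfrak m$ let $X_J$ be the $N\times N$ principal submatrix of $X$ with rows and columns indexed by $J$. For an indeterminate $a$, let $M_{C,C'}(X,a)$ be the determinant of the $(N-s)\times(N-s)$ submatrix of $X_J+a\,\mathrm{Id}_N$ formed by its first $N-s$ rows and its last $N-s$ columns. Let $d$ be the number of boxes lying strictly below row $R_s$ in the columns strictly between $C$ and $C'$. Then $M_{C,C'}(X,a)$ is divisible by $a^{d}$ as a polynomial in $a$, and $f_{C,C'}(X)$ is defined as the value at $a=0$ of $a^{-d}M_{C,C'}(X,a)$ (the Benlolo–Sanderson invariant of the pair $C,C'$ when $C,C'$ are neighbouring). *)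

(* Defs.v *)
(* The complex numbers are modelled as R[i] = complex R
   for an arbitrary R : realType (a complete archimedean ordered field,
   i.e. a model of the real numbers). *)
From HB Require Import structures.
From mathcomp Require Import all_boot all_order all_algebra.
From mathcomp Require Import reals complex.
Set Implicit Arguments. Unset Strict Implicit. Unset Printing Implicit Defensive.
Import Order.TTheory GRing.Theory Num.Theory.
Local Open Scope ring_scope.

Definition composition (n : nat) (c : seq nat) : Prop :=
  all (fun x => 0 < x)%N c /\ sumn c = n.

(* psum c l = c_1 + ... + c_l (0-based: sum of the first l parts). *)
Definition psum (c : seq nat) (l : nat) : nat := sumn (take l c).

(* 0-based block (column) index of the 0-based matrix index t:
   the unique l with psum c l <= t < psum c l.+1. *)
Definition blk (c : seq nat) (t : nat) : nat :=
  count (fun l => psum c l.+1 <= t)%N (iota 0 (size c)).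

(* The nilradical m: span of x_{i,j}, i<j in different diagonal blocks. *)
Definition nilrad (R : nzRingType) (n : nat) (c : seq nat) : pred 'M[R]_n :=
  fun X => [forall i : 'I_n, forall j : 'I_n,
             (X i j != 0) ==> ((i < j)%N && (blk c i != blk c j))].

(* Entry of a matrix addressed by natural numbers (0 outside the range). *)
Definition mxn (R : nzRingType) (n : nat) (X : 'M[R]_n) (r t : nat) : R :=
  match insub r, insub t with
  | Some i, Some j => X i j
  | _, _ => 0
  end.

(* The polynomial M_{C,C'}(X, a) for columns with 0-based indices i < k:
   J = [a0, a0 + N - 1] (0-based), rows 0..N-s-1 and columns s..N-1 of
   X_J + a Id_N. *)
Definition Mpoly (R : nzRingType) (n : nat) (c : seq nat) (i k : nat)
    (X : 'M[R]_n) : {poly R} :=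
  let s := nth 0%N c i in
  let a0 := psum c i in
  let N := (psum c k.+1 - a0)%N in
  \det (\matrix_(r < N - s, t < N - s)
          ((mxn X (a0 + r) (a0 + s + t))%:P
           + (if r == (s + t)%N :> nat then 'X else 0))).

(* d = number of boxes strictly below row R_s in columns strictly between. *)
Definition dboxes (c : seq nat) (i k : nat) : nat :=
  (\sum_(i.+1 <= l < k) (nth 0 c l - nth 0 c i))%N.

(* f_{C,C'}(X) = value at a = 0 of a^{-d} M_{C,C'}(X,a), i.e. the value at 0
   of the quotient of M by X^d (equivalently the d-th coefficient of M). *)
Definition fCC (R : fieldType) (n : nat) (c : seq nat) (i k : nat)
    (X : 'M[R]_n) : R :=
  ((Mpoly c i k X) %/ 'X^(dboxes c i k)).[0].

(* Main.v *)
Require Import Defs.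
From HB Require Import structures.
From mathcomp Require Import all_boot all_order all_algebra.
From mathcomp Require Import reals complex.
From mathcomp Require Import all_fingroup zify.
Import Order.TTheory GRing.Theory Num.Theory.
Set Implicit Arguments. Unset Strict Implicit. Unset Printing Implicit Defensive.
Local Open Scope ring_scope.

Lemma psum_mono (c : seq nat) a b : (a <= b)%N -> (psum c a <= psum c b)%N.
Proof.
move=> ab; rewrite /psum -(subnKC ab) takeD sumn_cat; exact: leq_addr.
Qed.

Lemma psumS (c : seq nat) l : (l < size c)%N -> psum c l.+1 = (psum c l + nth 0%N c l)%N.
Proof. by move=> lt; rewrite /psum (take_nth 0%N lt) -cats1 sumn_cat /= addn0. Qed.

Lemma blk_ival (c : seq nat) g l : (l < size c)%N ->
  (psum c l <= g < psum c l.+1)%N -> blk c g = l.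
Proof.
move=> lt /andP [h1 h2]; rewrite /blk.
rewrite -(subnKC (ltnW lt)) iotaD count_cat add0n.
rewrite (eq_in_count (a2 := predT)); last first.
  move=> l' /=; rewrite mem_iota add0n => /andP [_ hl'].
  by rewrite (leq_trans (psum_mono c hl') h1).
rewrite count_predT size_iota (eq_in_count (a2 := pred0)); last first.
  move=> l' /=; rewrite mem_iota => /andP [hl' _].
  apply/negbTE; rewrite -ltnNge; apply: (leq_trans h2); exact: psum_mono.
by rewrite count_pred0 addn0.
Qed.

Lemma card_ord_pred m (p : pred nat) : #|[pred r : 'I_m | p r]| = count p (iota 0 m).
Proof.
rewrite -sum1_card (eq_bigl (fun r : 'I_m => p r)) //.
by rewrite -(big_mkord p (fun _ => 1%N)) /index_iota subn0 sum1_count.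
Qed.

Lemma count_ival m lo hi :
  count (fun r => (lo <= r) && (r < hi))%N (iota 0 m) = (minn hi m - minn lo m)%N.
Proof.
elim: m => [|m IH]; first by rewrite !minn0.
rewrite -addn1 iotaD count_cat IH /= add0n addn0.
case: (leqP lo m) => h1; case: (ltnP m hi) => h2 /=; lia.
Qed.

Lemma card_ival m lo hi :
  #|[pred r : 'I_m | (lo <= r < hi)%N]| = (minn hi m - minn lo m)%N.
Proof. by rewrite (card_ord_pred m (fun r => (lo <= r) && (r < hi))%N) count_ival. Qed.

Lemma card_lt m q : #|[pred r : 'I_m | (r < q)%N]| = minn q m.
Proof.
have := card_ival m 0 q; rewrite min0n subn0 => <-.
by apply: eq_card => r.
Qed.

Lemma card_perm_preim m (p : 'S_m) (P : pred 'I_m) :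
  #|[pred r | P (p r)]| = #|P|.
Proof.
have := card_preimset [set t | P t] (@perm_inj _ p).
rewrite [in RHS]cardsE => <-; rewrite -cardsE; apply: eq_card => r.
by rewrite !inE.
Qed.

Lemma nilradP (R : nzRingType) n c (X : 'M[R]_n) : X \in nilrad c ->
  forall i j : 'I_n, X i j != 0 -> (i < j)%N && (blk c i != blk c j).
Proof.
rewrite unfold_in => /forallP H i j; move: (H i) => /forallP /(_ j) /implyP //.
Qed.

Lemma mxn_nz (R : nzRingType) n c (X : 'M[R]_n) g h : X \in nilrad c ->
  mxn X g h != 0 -> (g < h)%N && (blk c g != blk c h).
Proof.
move=> HX; rewrite /mxn.
case: (insubP 'I_n g) => [i _ vi|_]; case: (insubP 'I_n h) => [j _ vj|_]; rewrite ?eqxx //.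
by move/(nilradP HX); rewrite vi vj.
Qed.

Lemma mxn_diag (R : nzRingType) n c (X : 'M[R]_n) g : X \in nilrad c -> mxn X g g = 0.
Proof.
move=> HX; apply/eqP; apply/negPn/negP => /(mxn_nz HX); by rewrite ltnn.
Qed.

Lemma card_Sq m s (p : 'S_m) q : (forall r : 'I_m, (r <= s + p r)%N) ->
  (#|[pred r : 'I_m | (r < q)%N && (q <= s + p r)%N]| <= s)%N.
Proof.
move=> hle.
have h1 := cardID [pred r : 'I_m | (q <= s + p r)%N] [pred r : 'I_m | (r < q)%N].
have e2 : #|[predD [pred r : 'I_m | (r < q)%N] & [pred r : 'I_m | (q <= s + p r)%N]]|
   = #|[pred r | (fun t : 'I_m => (s + t < q)%N) (p r)]|.
  apply: eq_card => r; rewrite !inE /=; have := hle r; lia.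
rewrite (card_perm_preim p (fun t : 'I_m => (s + t < q)%N)) in e2.
have e3 : #|(fun t : 'I_m => (s + t < q)%N)| = #|[pred t : 'I_m | (t < q - s)%N]|.
  by apply: eq_card => t; rewrite !inE /=; lia.
rewrite e3 card_lt in e2.
have e1 : #|[predI [pred r : 'I_m | (r < q)%N] & [pred r : 'I_m | (q <= s + p r)%N]]|
   = #|[pred r : 'I_m | (r < q)%N && (q <= s + p r)%N]| by apply: eq_card.
rewrite e1 e2 card_lt in h1; lia.
Qed.

Definition Ffix (s m : nat) (r t : 'I_m) : bool := (val r == s + val t)%N.

Lemma part_card m (P : pred 'I_m) (g : 'I_m -> nat) a b :
  (\sum_(a <= l < b) #|[pred r | P r && (g r == l)]| <= #|P|)%N.
Proof.
rewrite (eq_bigr (fun l => \sum_(r | P r) (g r == l : nat))); last first.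
  move=> l _; rewrite -sum1_card (eq_bigl (fun r => P r && (g r == l))) //.
  by rewrite big_mkcondr; apply: eq_bigr => r _; case: eqP.
rewrite exchange_big /= -sum1_card.
apply: leq_sum => r _.
have -> : (\sum_(a <= l < b) (g r == l : nat) = count (pred1 (g r)) (index_iota a b))%N.
  rewrite -sum1_count [RHS]big_mkcond; apply: eq_bigr => l _ /=; rewrite eq_sym; by case: eqP.
by rewrite (count_uniq_mem (g r) (iota_uniq _ _)) leq_b1.
Qed.

Section Setting.
Variables (R : nzRingType) (n : nat) (c : seq nat) (X : 'M[R]_n).
Hypothesis HX : X \in nilrad c.
Variables (a0 s m : nat) (p : 'S_m).
Hypothesis Hnz : forall r, ~~ Ffix s r (p r) -> mxn X (a0 + r) (a0 + s + p r) != 0.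

Lemma row_le (r : 'I_m) : (r <= s + p r)%N.
Proof.
case E: (Ffix s r (p r)); first by rewrite (eqP E).
have /(mxn_nz HX) /andP [h _] := Hnz (negbT E); lia.
Qed.

Lemma nf_Sq l (r : 'I_m) : (l < size c)%N -> (psum c l <= a0 + r < psum c l.+1)%N ->
  ~~ Ffix s r (p r) -> (r < psum c l.+1 - a0)%N && (psum c l.+1 - a0 <= s + p r)%N.
Proof.
move=> lt hI nf.
have /(mxn_nz HX) /andP [h1 h2] := Hnz nf.
rewrite (blk_ival lt hI) in h2.
case: (ltnP (a0 + s + p r) (psum c l.+1)) => h3.
  have : (psum c l <= a0 + s + p r < psum c l.+1)%N by lia.
  by move/(blk_ival lt) => e; rewrite e eqxx in h2.
apply/andP; split; lia.
Qed.

Lemma fix_lb l : (l < size c)%N -> (a0 <= psum c l)%N -> (psum c l.+1 <= a0 + m)%N ->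
  (nth 0%N c l - s <= #|[pred r : 'I_m | Ffix s r (p r) &&
                         (psum c l <= a0 + r < psum c l.+1)%N]|)%N.
Proof.
move=> lt h1 h2.
set I := [pred r : 'I_m | (psum c l <= a0 + r < psum c l.+1)%N].
have cI : #|I| = nth 0%N c l.
  rewrite (eq_card (B := [pred r : 'I_m | (psum c l - a0 <= r < psum c l.+1 - a0)%N])).
    rewrite card_ival; have := psumS lt; lia.
  by move=> r; rewrite !inE /=; lia.
have h := cardID (fun r => Ffix s r (p r)) I.
have hD : (#|[predD I & (fun r => Ffix s r (p r))]| <= s)%N.
  apply: leq_trans (card_Sq (psum c l.+1 - a0) row_le).
  apply: subset_leq_card; apply/subsetP => r; rewrite !inE /= => /andP [nf hI].
  exact: nf_Sq.
have e : #|[predI I & (fun r => Ffix s r (p r))]| =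
   #|[pred r : 'I_m | Ffix s r (p r) && (psum c l <= a0 + r < psum c l.+1)%N]|.
  by apply: eq_card => r; rewrite !inE andbC.
rewrite -e -cI -h; apply: leq_trans (leq_sub2l _ hD) _; rewrite addnK. by [].
Qed.

Lemma sum_fix_le i k : (k < size c)%N -> a0 = psum c i -> (a0 + m = psum c k)%N ->
  (\sum_(i.+1 <= l < k) #|[pred r : 'I_m | Ffix s r (p r) &&
        (psum c l <= a0 + r < psum c l.+1)%N]| <= #|[pred r : 'I_m | Ffix s r (p r)]|)%N.
Proof.
move=> hk ha hm.
apply: leq_trans (part_card _ (fun r : 'I_m => blk c (a0 + r)) i.+1 k).
rewrite big_nat_cond [X in (_ <= X)%N]big_nat_cond.
apply: leq_sum => l /andP [/andP [hl1 hl2] _].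
apply: subset_leq_card; apply/subsetP => r; rewrite !inE /= => /andP [-> hI] /=.
by rewrite (blk_ival _ hI) //; lia.
Qed.

Lemma dboxes_le i k : (k < size c)%N -> a0 = psum c i -> (a0 + m = psum c k)%N ->
  s = nth 0%N c i ->
  (\sum_(i.+1 <= l < k) (nth 0%N c l - s) <=
     \sum_(i.+1 <= l < k) #|[pred r : 'I_m | Ffix s r (p r) &&
        (psum c l <= a0 + r < psum c l.+1)%N]|)%N.
Proof.
move=> hk ha hm hs.
rewrite big_nat_cond [X in (_ <= X)%N]big_nat_cond.
apply: leq_sum => l /andP [/andP [hl1 hl2] _].
apply: fix_lb; first lia.
  by rewrite ha; apply: psum_mono; lia.
by rewrite hm; apply: psum_mono.
Qed.

End Setting.

Lemma coef_det_shape (R : comNzRingType) m (A : 'M[{poly R}]_m)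
   (F : 'I_m -> 'I_m -> bool) (x : 'I_m -> 'I_m -> R) :
  (forall r t, A r t = if F r t then 'X else (x r t)%:P) -> forall j,
  (\det A)`_j = \sum_(p : 'S_m) (-1) ^+ p *
     ((#|[pred r | F r (p r)]| == j)%:R * \prod_(r | ~~ F r (p r)) x r (p r)).
Proof.
move=> HA j; rewrite /determinant coef_sum; apply: eq_bigr => p _.
have -> : \prod_i A i (p i) = (\prod_(r | ~~ F r (p r)) x r (p r))%:P *
                               'X^#|[pred r | F r (p r)]|.
  rewrite (bigID (fun r => F r (p r))) /= mulrC; congr (_ * _).
    by rewrite rmorph_prod; apply: eq_bigr => r /negbTE h; rewrite HA h.
  rewrite (eq_bigr (fun _ => 'X)); last by move=> r h; rewrite HA h.
  by rewrite prodr_const.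
case: (odd_perm p); rewrite ?expr1 ?expr0 ?mulN1r ?mul1r ?coefN coefCM coefXn eq_sym;
  by rewrite mulrC.
Qed.

Lemma card_ival_blk m (c : seq nat) a0 l : (l < size c)%N -> (a0 <= psum c l)%N ->
  (psum c l.+1 <= a0 + m)%N ->
  #|[pred r : 'I_m | (psum c l <= a0 + r < psum c l.+1)%N]| = nth 0%N c l.
Proof.
move=> lt h1 h2.
rewrite (eq_card (B := [pred r : 'I_m | (psum c l - a0 <= r < psum c l.+1 - a0)%N])).
  rewrite card_ival; have := psumS lt; lia.
by move=> r; rewrite !inE /=; lia.
Qed.

Lemma range_le (R : nzRingType) n c (X : 'M[R]_n) (HX : X \in nilrad c) a0 s m (p : 'S_m)
  (Hnz : forall r, ~~ Ffix s r (p r) -> mxn X (a0 + r) (a0 + s + p r) != 0)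
  i k a b : (k < size c)%N -> a0 = psum c i -> (a0 + m = psum c k)%N ->
  (i < a)%N -> (b <= k)%N ->
  (\sum_(a <= l < b) (nth 0%N c l - s) <=
     \sum_(a <= l < b) #|[pred r : 'I_m | Ffix s r (p r) &&
        (psum c l <= a0 + r < psum c l.+1)%N]|)%N.
Proof.
move=> hk ha hm hia hbk.
rewrite big_nat_cond [X in (_ <= X)%N]big_nat_cond.
apply: leq_sum => l /andP [/andP [hl1 hl2] _].
apply: (fix_lb HX Hnz); first lia.
  by rewrite ha; apply: psum_mono; lia.
by rewrite hm; apply: psum_mono; lia.
Qed.

Section Main.
Variables (R : nzRingType) (n : nat) (c : seq nat) (X : 'M[R]_n).
Hypothesis HX : X \in nilrad c.
Variables (i1 i2 i3 : nat).
Hypotheses (h12 : (i1 < i2)%N) (h23 : (i2 < i3)%N) (h3 : (i3 < size c)%N)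
  (e2 : nth 0%N c i2 = nth 0%N c i1) (e3 : nth 0%N c i3 = nth 0%N c i1).
Let s := nth 0%N c i1.
Let a0 := psum c i1.
Let m1 := (psum c i2 - psum c i1)%N.
Let m2 := (psum c i3 - psum c i2)%N.

Lemma ps12 : (psum c i1 <= psum c i2)%N. Proof. apply: psum_mono; lia. Qed.
Lemma ps23 : (psum c i2 <= psum c i3)%N. Proof. apply: psum_mono; lia. Qed.
Lemma ps2S : psum c i2.+1 = (psum c i2 + s)%N.
Proof. rewrite psumS ?e2 //; lia. Qed.
Lemma ps3S : psum c i3.+1 = (psum c i3 + s)%N.
Proof. by rewrite psumS ?e3. Qed.

Lemma key_pres (p : 'S_(m1 + m2))
  (Hnz : forall r, ~~ Ffix s r (p r) -> mxn X (a0 + r) (a0 + s + p r) != 0) :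
  #|[pred r | Ffix s r (p r)]| = dboxes c i1 i3 ->
  forall r : 'I_(m1 + m2), (r < m1)%N -> (p r < m1)%N.
Proof.
move=> hF.
have hm : (a0 + (m1 + m2) = psum c i3)%N by have := ps12; have := ps23; rewrite /a0 /m1 /m2; lia.
have hsum := sum_fix_le HX s p (i := i1) h3 (erefl a0) hm.
rewrite hF /dboxes -/s in hsum.
set f := fun l => #|[pred r : 'I_(m1 + m2) | Ffix s r (p r) &&
        (psum c l <= a0 + r < psum c l.+1)%N]|.
rewrite -/(f _) in hsum.
have split3 : forall g : nat -> nat, (\sum_(i1.+1 <= l < i3) g l =
   \sum_(i1.+1 <= l < i2) g l + (g i2 + \sum_(i2.+1 <= l < i3) g l))%N.
  by move=> g; rewrite (big_cat_nat _ (n := i2)) ?(ltnW h23) // (big_ltn h23).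
rewrite !split3 e2 subnn add0n in hsum.
have l1 := range_le HX Hnz (i := i1) (a := i1.+1) (b := i2) h3 (erefl a0) hm (ltnSn _) (ltnW h23).
have l2 := range_le HX Hnz (i := i1) (a := i2.+1) (b := i3) h3 (erefl a0) hm (ltn_trans h12 (ltnSn i2)) (leqnn _).
have f0 : #|[pred r : 'I_(m1+m2) | Ffix s r (p r) &&
   (psum c i2 <= a0 + r < psum c i2.+1)%N]| = 0%N.
  move: hsum l1 l2; set A := \sum_(_ <= _ < i2) _; set B := \sum_(_ <= _ < i3) _.
  set C := \sum_(_ <= _ < i2) _; set D := \sum_(_ <= _ < i3) _; lia.
have nfI : forall r : 'I_(m1+m2), (psum c i2 <= a0 + r < psum c i2.+1)%N -> ~~ Ffix s r (p r).
  move/card0_eq: f0 => f0 r hI; apply/negP => hF'; have := f0 r; by rewrite !inE /= hF' hI.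
move=> r0 hr0; apply/negPn/negP; rewrite -leqNgt => hp.
have hSq := card_Sq (psum c i2.+1 - a0) (row_le HX Hnz).
have hle2 : (psum c i2.+1 <= a0 + (m1 + m2))%N.
  rewrite hm; apply: psum_mono; exact: h23.
have hI := card_ival_blk (m := m1 + m2) (a0 := a0) (ltn_trans h23 h3) ps12 hle2.
rewrite e2 in hI.
have sub : {subset [predU1 r0 & [pred r : 'I_(m1+m2) | (psum c i2 <= a0 + r < psum c i2.+1)%N]] <=
   [pred r : 'I_(m1+m2) | (r < psum c i2.+1 - a0)%N && (psum c i2.+1 - a0 <= s + p r)%N]}.
  move=> r; rewrite !inE => /orP [/eqP -> | hr] /=.
    rewrite ps2S; apply/andP; split; rewrite /a0; lia.
  exact: (nf_Sq HX Hnz (ltn_trans h23 h3) hr (nfI _ hr)).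
have := subset_leq_card (introT subsetP sub).
rewrite cardU1 hI.
have -> : r0 \notin [pred r : 'I_(m1+m2) | (psum c i2 <= a0 + r < psum c i2.+1)%N].
  by rewrite !inE /=; have := ps12; rewrite /a0 /m1 in hr0 *; lia.
move: hSq; rewrite -/s /= add1n => h1 h2.
by have := leq_trans h2 h1; rewrite ltnn.
Qed.
End Main.

Lemma prod_nz_factor (R : comNzRingType) (I : finType) (P : pred I) (F : I -> R) :
  \prod_(i | P i) F i != 0 -> forall i, P i -> F i != 0.
Proof.
move=> H i Pi; apply/negP => /eqP F0; move: H; by rewrite (bigD1 i) //= F0 mul0r eqxx.
Qed.

Lemma perm_stab m (p : 'S_m) (A : pred 'I_m) :
  (forall x, A x -> A (p x)) -> forall x, A (p x) -> A x.
Proof.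
move=> H x hx.
have sub : p @: [set y | A y] \subset [set y | A y].
  by apply/subsetP => y /imsetP [z]; rewrite !inE => hz ->; exact: H.
have : p @: [set y | A y] == [set y | A y].
  by rewrite eqEcard sub card_imset //=; exact: (@perm_inj _ p).
move/eqP => e.
have : p x \in p @: [set y | A y] by rewrite e inE.
by rewrite mem_imset ?inE //; exact: (@perm_inj _ p).
Qed.

Definition Amx (R : nzRingType) n (X : 'M[R]_n) (m a0 s : nat) : 'M[{poly R}]_m :=
  \matrix_(r < m, t < m) ((mxn X (a0 + r) (a0 + s + t))%:P
                           + (if r == (s + t)%N :> nat then 'X else 0)).

Lemma Mpoly_Amx (R : nzRingType) n c i k (X : 'M[R]_n) :
  Mpoly c i k X = \det (Amx X (psum c k.+1 - psum c i - nth 0%N c i) (psum c i) (nth 0%N c i)).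
Proof. by []. Qed.

Lemma Amx_shape (R : nzRingType) n c (X : 'M[R]_n) (HX : X \in nilrad c) m a0 s r t :
  Amx X m a0 s r t = if Ffix s r t then 'X else (mxn X (a0 + r) (a0 + s + t))%:P.
Proof.
rewrite mxE /Ffix; case: eqP => [e|_]; last by rewrite addr0.
by rewrite e addnA (mxn_diag _ HX) add0r.
Qed.

Lemma low_coef (R : comNzRingType) n c (X : 'M[R]_n) (HX : X \in nilrad c) i k :
  (k < size c)%N -> (i <= k)%N -> forall j, (j < dboxes c i k)%N ->
  (\det (Amx X (psum c k - psum c i) (psum c i) (nth 0%N c i)))`_j = 0.
Proof.
move=> hk hik j hj.
rewrite (coef_det_shape (Amx_shape HX _ _)); apply: big1 => p _.
case: eqP => [hF|_]; last by rewrite mul0r mulr0.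
case: (eqVneq (\prod_(r | ~~ Ffix (nth 0%N c i) r (p r))
   mxn X (psum c i + r) (psum c i + nth 0%N c i + p r)) 0) => [->|nz]; first by rewrite !mulr0.
exfalso.
have Hnz := prod_nz_factor nz.
have hm : (psum c i + (psum c k - psum c i))%N = psum c k.
  by have := psum_mono c hik; lia.
have := leq_trans (dboxes_le HX Hnz hk (erefl _) hm (erefl _)) (sum_fix_le HX _ p hk (erefl _) hm).
rewrite hF; rewrite /dboxes in hj; lia.
Qed.

Section Main2.
Variables (R : fieldType) (n : nat) (c : seq nat) (X : 'M[R]_n).
Hypothesis HX : X \in nilrad c.
Variables (i1 i2 i3 : nat).
Hypotheses (h12 : (i1 < i2)%N) (h23 : (i2 < i3)%N) (h3 : (i3 < size c)%N)
  (e2 : nth 0%N c i2 = nth 0%N c i1) (e3 : nth 0%N c i3 = nth 0%N c i1).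
Let s := nth 0%N c i1.
Let a0 := psum c i1.
Let m1 := (psum c i2 - psum c i1)%N.
Let m2 := (psum c i3 - psum c i2)%N.
Let K := Amx X (m1 + m2) a0 s.
Let LL (r t : 'I_(m1 + m2)) := (t < m1 <= r)%N.
Let K0 := \matrix_(r, t) (if LL r t then 0 else K r t).

Lemma K0_shape r t : K0 r t = if Ffix s r t && ~~ LL r t then 'X
   else (if LL r t then 0 else mxn X (a0 + r) (a0 + s + t))%:P.
Proof.
rewrite mxE /K (Amx_shape HX); case: (LL r t); rewrite ?andbF ?andbT //.
Qed.

Lemma K_K0 : (\det K)`_(dboxes c i1 i3) = (\det K0)`_(dboxes c i1 i3).
Proof.
rewrite (coef_det_shape (Amx_shape HX _ _)) (coef_det_shape K0_shape).
apply: eq_bigr => p _; congr (_ * _).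
case: (boolP [forall r : 'I_(m1+m2), (r < m1)%N ==> (p r < m1)%N]) => [pres|npres].
  have hLL : forall r, ~~ LL r (p r).
    move=> r; rewrite /LL; apply/negP => /andP [hp hr].
    have := perm_stab (A := fun x : 'I_(m1+m2) => (x < m1)%N) _ hp.
    rewrite ltnNge hr => H; suff : ~~ true by []; apply: H => x hx; exact: (implyP (forallP pres x)).
  congr (_ * _).
    by congr ((_ == _)%:R); apply: eq_card => r /=; rewrite !inE /= (negbTE (hLL r)) andbT.
  rewrite [in RHS](eq_bigl (fun r => ~~ Ffix s r (p r))); last by move=> r; rewrite /= (negbTE (hLL r)) andbT.
  by apply: eq_bigr => r _; rewrite (negbTE (hLL r)).
have [r0 hr0] : exists r0 : 'I_(m1+m2), (r0 < m1)%N && (m1 <= p r0)%N.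
  move/forallPn: npres => [r0]; rewrite negb_imply -leqNgt => h; by exists r0.
case: (boolP [forall r : 'I_(m1+m2), (m1 <= r)%N ==> (m1 <= p r)%N]) => [st|nst].
  move/andP: hr0 => [h1 h2].
  have := perm_stab (A := fun x : 'I_(m1+m2) => (m1 <= x)%N) _ h2.
  rewrite leqNgt h1 /= => H; suff : false by []; apply: H => x hx; exact: (implyP (forallP st x)).
move/forallPn: nst => [r1]; rewrite negb_imply -ltnNge => /andP [hr1 hpr1].
have LL1 : LL r1 (p r1) by rewrite /LL hpr1 hr1.
rewrite [X in _ = _ * X](bigD1 r1) /=; last by rewrite LL1 andbF.
rewrite LL1 mul0r mulr0.
case: eqP => [hF|_]; last by rewrite mul0r.
case: (eqVneq (\prod_(r | ~~ Ffix s r (p r)) mxn X (a0 + r) (a0 + s + p r)) 0) => [->|nz];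
  first by rewrite mulr0.
exfalso.
have Hnz := prod_nz_factor nz.
have := key_pres HX h12 h23 h3 e2 e3 Hnz hF.
move/andP: hr0 => [h1 h2] /(_ r0 h1); by rewrite ltnNge h2.
Qed.

Lemma detK0 : \det K0 = \det (Amx X m1 a0 s) * \det (Amx X m2 (psum c i2) s).
Proof.
have ha : psum c i2 = (a0 + m1)%N by have := psum_mono c (ltnW h12); rewrite /a0 /m1; lia.
rewrite -[K0]submxK (_ : dlsubmx K0 = 0) ?det_ublock; last first.
  apply/matrixP => r t; rewrite !mxE /LL /=.
  by rewrite ltn_ord leq_addr.
congr (_ * _); f_equal; apply/matrixP => r t; rewrite !mxE /LL /=.
  by rewrite [(m1 <= r)%N]leqNgt !ltn_ord.
rewrite ltnNge leq_addr /= ha.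
rewrite [(s + (m1 + t))%N]addnCA eqn_add2l !addnA [(a0 + s + m1)%N]addnAC.
by [].
Qed.

Lemma main_eq : fCC c i1 i3 X = fCC c i1 i2 X * fCC c i2 i3 X.
Proof.
rewrite /fCC -!Pdiv.IdomainMonic.drop_poly_divp !horner_coef0 !coef_drop_poly !add0n !Mpoly_Amx.
have E13 : (psum c i3.+1 - psum c i1 - nth 0%N c i1 = m1 + m2)%N.
  by rewrite (psumS h3) e3 /m1 /m2 -/s; have := psum_mono c (ltnW h12); have := psum_mono c (ltnW h23); lia.
have E12 : (psum c i2.+1 - psum c i1 - nth 0%N c i1 = m1)%N.
  by rewrite (psumS (ltn_trans h23 h3)) e2 /m1 -/s; have := psum_mono c (ltnW h12); lia.
have E23 : (psum c i3.+1 - psum c i2 - nth 0%N c i2 = m2)%N.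
  by rewrite (psumS h3) e3 e2 /m2 -/s; have := psum_mono c (ltnW h23); lia.
rewrite E13 E12 E23 e2.
have d13 : dboxes c i1 i3 = (dboxes c i1 i2 + dboxes c i2 i3)%N.
  rewrite /dboxes e2 (big_cat_nat _ (n := i2)) ?(ltnW h23) //= (big_ltn h23) e2 subnn add0n //.
have lT := low_coef HX (ltn_trans h23 h3) (ltnW h12).
have lW := low_coef HX h3 (ltnW h23); rewrite e2 in lW.
rewrite K_K0 detK0 d13 coefM.
have hlt : (dboxes c i1 i2 < (dboxes c i1 i2 + dboxes c i2 i3).+1)%N by lia.
rewrite (bigD1 (Ordinal hlt)) //= addKn big1 ?addr0 //.
move=> j /eqP hj; case: (ltngtP j (dboxes c i1 i2)) => h.
- by rewrite lT ?mul0r.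
- rewrite lW ?mulr0 //; have := ltn_ord j; lia.
- by exfalso; apply: hj; apply: val_inj.
Qed.
End Main2.

Unset Implicit Arguments.
Set Strict Implicit.

(* Columns are indexed 0-based by positions in c: C = column i1,
   C'' = column i2, C' = column i3. *)
Theorem lemma1p10 (R : realType) (n : nat) (c : seq nat) (i1 i2 i3 : nat) :
  (2 <= n)%N -> composition n c ->
  (i1 < i2)%N -> (i2 < i3)%N -> (i3 < size c)%N ->
  nth 0%N c i2 = nth 0%N c i1 -> nth 0%N c i3 = nth 0%N c i1 ->
  (forall l, (i1 < l)%N -> (l < i3)%N -> l != i2 -> nth 0%N c l != nth 0%N c i1) ->
  exists lam : R[i], lam != 0 /\
    forall X : 'M[R[i]]_n, X \in nilrad c ->
      fCC c i1 i3 X = lam * fCC c i1 i2 X * fCC c i2 i3 X.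
Proof.
move=> _ _ h12 h23 h3 e2 e3 _; exists 1; split; first exact: oner_neq0.
by move=> X HX; rewrite mul1r (main_eq HX h12 h23 h3 e2 e3).
Qed.
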